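(* Let $E\subset\mathbb{R}^2$, $E_o:=\{(x,y)\in E:x\neq y\}$, and let $C$ be a connected component of $E_o$ containing no identifying cycles. Let $C^{\mathsf{x}}$ and $C^{\mathsf{y}}$ denote the projections of $C$ onto the first and second coordinate. (a) For any $v:C\to\mathbb{R}$ of the form $v(x,y)=h(x)(y-x)+g(y)$ on $C$, the portfolio positions of $v$ on $C$ are not unique at any point of $C$: for every $(x,y)\in C$ there exist two portfolio positions $(h,g),(\tilde h,\tilde g)$ of $v$ on $C$ with $h(x)\neq\tilde h(x)$ and $g(y)\neq\tilde g(y)$; and the set of portfolio positions of $v$ on $C$ (restricted to $C^{\mathsf{x}}\times C^{\mathsf{y}}$) is a one-parameter family. (b) Fix $(x_0,y_0)\in C$. There exist functions $a,b:\mathbb{R}\to\mathbb{R}\setminus\{0\}$ such that $a(x)b(y)=y-x$ for all $(x,y)\in C$ and $a(x_0)=1$, and these are unique on $C^{\mathsf{x}}$ and $C^{\mathsf{y}}$, respectively. Let $v_n(x,y)=h_n(x)(y-x)+g_n(y)$, with $h_n,g_n:\mathbb{R}\to\mathbb{R}$, converge pointwise on $C$ to $v:C\to\mathbb{R}$. Define $h'_n(x):=h_n(x)-h_n(x_0)/a(x)$ and $g'_n(y):=g_n(y)+h_n(x_0)b(y)$. Then $v_n(x,y)=h'_n(x)(y-x)+g'_n(y)$ on $C$, the pointwise limits $h':=\lim_n h'_n$ on $C^{\mathsf{x}}$ and $g':=\lim_n g'_n$ on $C^{\mathsf{y}}$ exist, and $v(x,y)=h'(x)(y-x)+g'(y)$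 for all $(x,y)\in C$. In particular, semistatic strategies on $C$ are closed under pointwise convergence.
   Context: A portfolio position of $v$ on $C$ is a pair $h,g:\mathbb{R}\to\mathbb{R}$ with $v(x,y)=h(x)(y-x)+g(y)$ for all $(x,y)\in C$. A path in $E_o$ from $(x,y)\in E_o$ to $(x',y')\in E_o$ is a tuple $(x_i,y_i)_{i=1}^k\in E_o^k$, $k\in\mathbb{N}_0$, such that all points $(x,y),(x_1,y),(x_1,y_1),(x_2,y_1),\dots,(x_k,y_k),(x',y_k),(x',y')$ belong to $E_o$. Points are connected if there is a path between them; this is an equivalence relation on $E_o$ whose equivalence classes are the connected components. A cycle is a path from a point to itself; a cycle $(x_i,y_i)_{i=1}^k$ is identifying if $\prod_{i=1}^k(y_i-x_i)-\prod_{i=1}^k(y_i-x_{i+1})\neq0$ with $x_{k+1}:=x_1$. *)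

(* Defs.v *)
From Stdlib Require Import Reals List.
Import ListNotations.
Open Scope R_scope.

(* A set E ⊆ R^2 is a predicate E : R -> R -> Prop ("E x y" means (x,y) ∈ E). *)

Definition Eo (E : R -> R -> Prop) (x y : R) : Prop := E x y /\ x <> y.

(* is_path E x y l x' y' : the tuple l = (x_i,y_i)_{i=1..k} is a path in E_o
   from (x,y) to (x',y'), i.e. all of
   (x,y),(x_1,y),(x_1,y_1),(x_2,y_1),...,(x_k,y_k),(x',y_k),(x',y') lie in E_o. *)
Fixpoint is_path (E : R -> R -> Prop) (x y : R) (l : list (R * R)) (x' y' : R)
  : Prop :=
  match l with
  | [] => Eo E x y /\ Eo E x' y /\ Eo E x' y'
  | (x1, y1) :: l' => Eo E x y /\ Eo E x1 y /\ is_path E x1 y1 l' x' y'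
  end.

Definition connected (E : R -> R -> Prop) (x y x' y' : R) : Prop :=
  exists l, is_path E x y l x' y'.

Definition is_component (E C : R -> R -> Prop) : Prop :=
  exists x y, Eo E x y /\ forall x' y', C x' y' <-> connected E x y x' y'.

Definition prodR (l : list R) : R := fold_right Rmult 1 l.

Definition cyc_prod1 (l : list (R * R)) : R :=
  prodR (map (fun p => snd p - fst p) l).

(* prod_{i=1}^k (y_i - x_{i+1}) with x_{k+1} := x_1 *)
Definition cyc_prod2 (l : list (R * R)) : R :=
  let xs := map fst l in
  let xs_shift := match xs with [] => [] | x1 :: t => t ++ [x1] end in
  prodR (map (fun p => snd (fst p) - snd p) (combine l xs_shift)).

Definition identifying (l : list (R * R)) : Prop :=
  cyc_prod1 l - cyc_prod2 l <> 0.

Definition no_identifying_cycles (E C : R -> R -> Prop) : Prop :=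
  forall x y l, C x y -> is_path E x y l x y -> ~ identifying l.

Definition projx (C : R -> R -> Prop) (x : R) : Prop := exists y, C x y.
Definition projy (C : R -> R -> Prop) (y : R) : Prop := exists x, C x y.

Definition portfolio_position (C : R -> R -> Prop) (v : R -> R -> R)
  (h g : R -> R) : Prop :=
  forall x y, C x y -> v x y = h x * (y - x) + g y.

(* Main.v *)
Require Import Defs.
From Stdlib Require Import Reals List Lra ClassicalEpsilon Classical.
Import ListNotations.
Open Scope R_scope.

Fixpoint rat (x y : R) (l : list (R*R)) (x' : R) : R :=
  match l with
  | [] => (y - x') / (y - x)
  | (x1, y1) :: l' => (y - x1) / (y - x) * rat x1 y1 l' x'
  end.

Fixpoint P2 (x y : R) (l : list (R*R)) (x' : R) : R :=
  match l with
  | [] => y - x'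
  | (x1, y1) :: l' => (y - x1) * P2 x1 y1 l' x'
  end.

Lemma Eo_nz E x y : Eo E x y -> y - x <> 0.
Proof. intros [_ H]. lra. Qed.

Lemma path_start E l : forall x y x' y', is_path E x y l x' y' -> Eo E x y.
Proof. destruct l as [|[a b] l]; simpl; tauto. Qed.

Lemma path_end E l : forall x y x' y', is_path E x y l x' y' -> Eo E x' y'.
Proof. induction l as [|[a b] l IH]; simpl; intros x y x' y' H; [tauto|]. destruct H as [_ [_ H]]. eapply IH; eauto. Qed.

Lemma path_app E l1 : forall x y u w l2 x' y',
  is_path E x y l1 u w -> is_path E u w l2 x' y' ->
  is_path E x y (l1 ++ (u,w)::l2) x' y'.
Proof.
  induction l1 as [|[a b] l IH]; simpl; intros.
  - tauto.
  - split; [tauto|]. split; [tauto|]. apply IH; tauto.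
Qed.

Lemma rat_nz E l : forall x y x' y', is_path E x y l x' y' -> rat x y l x' <> 0.
Proof.
  induction l as [|[a b] l IH]; simpl; intros x y x' y' H.
  - destruct H as [H1 [H2 H3]]. apply Eo_nz in H1. apply Eo_nz in H2.
    unfold Rdiv. apply Rmult_integral_contrapositive; split; auto. apply Rinv_neq_0_compat; auto.
  - destruct H as [H1 [H2 H3]]. apply Eo_nz in H1. apply Eo_nz in H2.
    apply Rmult_integral_contrapositive; split; [|eapply IH; eauto].
    unfold Rdiv. apply Rmult_integral_contrapositive; split; auto. apply Rinv_neq_0_compat; auto.
Qed.

Lemma rat_app l1 : forall x y u w l2 x',
  rat x y (l1 ++ (u,w)::l2) x' = rat x y l1 u * rat u w l2 x'.
Proof.
  induction l1 as [|[a b] l IH]; simpl; intros; [reflexivity|].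
  rewrite IH. ring.
Qed.

Lemma path_rev E l : forall x y x' y', is_path E x y l x' y' ->
  exists l', is_path E x' y' l' x y /\ rat x' y' l' x * rat x y l x' = 1.
Proof.
  induction l as [|[x1 y1] l IH]; simpl; intros x y x' y' H.
  - exists [(x', y)]. simpl. destruct H as [H1 [H2 H3]]. split; [tauto|].
    apply Eo_nz in H1. apply Eo_nz in H2. apply Eo_nz in H3. field; auto.
  - destruct H as [H1 [H2 H3]].
    destruct (IH _ _ _ _ H3) as [l0 [Hp Hr]].
    exists (l0 ++ (x1,y1) :: [(x1,y)]). split.
    + apply path_app; auto. simpl. pose proof (path_start _ _ _ _ _ _ H3). tauto.
    + rewrite rat_app. simpl.
      pose proof (Eo_nz _ _ _ (path_start _ _ _ _ _ _ H3)).
      apply Eo_nz in H1. apply Eo_nz in H2.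
      set (R0 := rat x' y' l0 x1) in *. set (r0 := rat x1 y1 l x') in *.
      replace (R0 * ((y1 - x1) / (y1 - x1) * ((y - x) / (y - x1))) *
               ((y - x1) / (y - x) * r0))
        with ((R0 * r0) * ((y1 - x1) / (y1 - x1) * ((y - x) / (y - x1)) * ((y - x1) / (y - x))))
        by ring.
      rewrite Hr. field; auto.
Qed.

Lemma prod_nz E l : forall x y x' y', is_path E x y l x' y' ->
  prodR (map (fun p => snd p - fst p) l) <> 0.
Proof.
  induction l as [|[a b] l IH]; simpl; intros x y x' y' H.
  - lra.
  - destruct H as [H1 [H2 H3]].
    apply Rmult_integral_contrapositive; split.
    + exact (Eo_nz _ _ _ (path_start _ _ _ _ _ _ H3)).
    + eapply IH; eauto.
Qed.

Lemma rat_P2 E l : forall x y x' y', is_path E x y l x' y' ->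
  rat x y l x' * ((y - x) * prodR (map (fun p => snd p - fst p) l)) = P2 x y l x'.
Proof.
  induction l as [|[a b] l IH]; simpl; intros x y x' y' H.
  - destruct H as [H1 _]. apply Eo_nz in H1. field; auto.
  - destruct H as [H1 [H2 H3]]. apply Eo_nz in H1.
    rewrite <- (IH _ _ _ _ H3). simpl. field; auto.
Qed.

Lemma P2_comb l : forall x y x',
  prodR (map (fun p : R * R * R => snd (fst p) - snd p)
     (combine ((x,y)::l) (map fst l ++ [x']))) = P2 x y l x'.
Proof.
  induction l as [|[a b] l IH]; intros x y x'.
  - simpl. ring.
  - simpl. simpl in IH. rewrite IH. reflexivity.
Qed.

Section Comp.
Variables (E C : R -> R -> Prop).
Hypothesis HC : is_component E C.

Lemma C_Eo x y : C x y -> Eo E x y.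
Proof.
  destruct HC as [xb [yb [Hb HCe]]]. intros H. apply HCe in H.
  destruct H as [l Hl]. eapply path_end; eauto.
Qed.

Lemma C_path x y l x' y' : C x y -> is_path E x y l x' y' -> C x' y'.
Proof.
  destruct HC as [xb [yb [Hb HCe]]]. intros H Hp. apply HCe in H.
  destruct H as [lb Hl]. apply HCe. exists (lb ++ (x,y)::l). apply path_app; auto.
Qed.

Lemma reach x y x' y' : C x y -> C x' y' -> exists l, is_path E x y l x' y'.
Proof.
  destruct HC as [xb [yb [Hb HCe]]]. intros H H'. apply HCe in H. apply HCe in H'.
  destruct H as [l1 H1]. destruct H' as [l2 H2].
  destruct (path_rev _ _ _ _ _ _ H1) as [l1' [Hr _]].
  exists (l1' ++ (xb,yb)::l2). apply path_app; auto.
Qed.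

Lemma C_base : exists x y, C x y.
Proof.
  destruct HC as [xb [yb [Hb HCe]]]. exists xb, yb. apply HCe. exists []. simpl. tauto.
Qed.

Lemma propagate (Pt : R -> R -> Prop) :
  (forall x x1 y, C x y -> C x1 y -> Pt x y -> Pt x1 y) ->
  (forall x y y1, C x y -> C x y1 -> Pt x y -> Pt x y1) ->
  forall p1 p2, C p1 p2 -> Pt p1 p2 -> forall q1 q2, C q1 q2 -> Pt q1 q2.
Proof.
  intros Hh Hv p1 p2 Hp Pp q1 q2 Hq.
  destruct (reach _ _ _ _ Hp Hq) as [l Hl]. clear Hq.
  revert p1 p2 Hp Pp Hl.
  induction l as [|[x1 y1] l IH]; simpl; intros p1 p2 Hp Pp Hl.
  - destruct Hl as [H1 [H2 H3]].
    assert (C q1 p2) by (apply (C_path p1 p2 [] q1 p2); simpl; tauto).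
    apply (Hv q1 p2); auto. apply (C_path q1 p2 [] q1 q2); auto. simpl. tauto.
    apply (Hh p1); auto.
  - destruct Hl as [H1 [H2 H3]].
    pose proof (path_start _ _ _ _ _ _ H3).
    assert (C x1 p2) by (apply (C_path p1 p2 [] x1 p2); simpl; tauto).
    assert (C x1 y1) by (apply (C_path p1 p2 [] x1 y1); simpl; tauto).
    apply (IH x1 y1); auto. apply (Hv x1 p2); auto. apply (Hh p1); auto.
Qed.

Hypothesis HN : no_identifying_cycles E C.

Lemma cycle x y l : C x y -> is_path E x y l x y -> rat x y l x = 1.
Proof.
  intros Hc Hp.
  assert (Hp' : is_path E x y ((x,y)::l) x y) by (simpl; pose proof (C_Eo _ _ Hc); tauto).
  pose proof (HN x y _ Hc Hp') as Hn. unfold identifying in Hn.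
  assert (Heq : cyc_prod1 ((x,y)::l) = cyc_prod2 ((x,y)::l)).
  { destruct (Req_dec (cyc_prod1 ((x,y)::l)) (cyc_prod2 ((x,y)::l))); auto.
    exfalso; apply Hn; lra. }
  assert (E1 : cyc_prod1 ((x,y)::l) = (y - x) * prodR (map (fun p => snd p - fst p) l))
    by reflexivity.
  assert (E2 : cyc_prod2 ((x,y)::l) = P2 x y l x) by (exact (P2_comb l x y x)).
  rewrite E1, E2 in Heq. rewrite <- (rat_P2 _ _ _ _ _ _ Hp) in Heq.
  pose proof (Eo_nz _ _ _ (C_Eo _ _ Hc)). pose proof (prod_nz _ _ _ _ _ _ Hp).
  set (K := (y - x) * prodR (map (fun p => snd p - fst p) l)) in *.
  assert (K <> 0) by (apply Rmult_integral_contrapositive; auto).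
  apply (Rmult_eq_reg_r K); auto. lra.
Qed.

Lemma wd x0 y0 l1 l2 x y1 y2 : C x0 y0 -> is_path E x0 y0 l1 x y1 -> is_path E x0 y0 l2 x y2 ->
  rat x0 y0 l1 x = rat x0 y0 l2 x.
Proof.
  intros H0 H1 H2.
  destruct (path_rev _ _ _ _ _ _ H2) as [l2' [Hp Hr]].
  assert (Hs : is_path E x y1 ((x,y2)::l2') x0 y0).
  { simpl. pose proof (path_end _ _ _ _ _ _ H1). pose proof (path_start _ _ _ _ _ _ Hp). tauto. }
  pose proof (path_app _ _ _ _ _ _ _ _ _ H1 Hs) as Hc.
  pose proof (cycle _ _ _ H0 Hc) as Hq. rewrite rat_app in Hq. simpl in Hq.
  pose proof (Eo_nz _ _ _ (path_end _ _ _ _ _ _ H1)).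
  pose proof (rat_nz _ _ _ _ _ _ Hp).
  set (r1 := rat x0 y0 l1 x) in *. set (r2 := rat x0 y0 l2 x) in *.
  set (R2 := rat x y2 l2' x0) in *.
  replace ((y1 - x) / (y1 - x)) with 1 in Hq by (field; auto).
  apply (Rmult_eq_reg_l R2); auto. lra.
Qed.

Lemma ab_exist x0 y0 : C x0 y0 -> exists a b : R -> R,
        (forall x, a x <> 0) /\ (forall y, b y <> 0) /\
        (forall x y, C x y -> a x * b y = y - x) /\ a x0 = 1.
Proof.
  intros H0.
  set (S := fun x r => exists y l, is_path E x0 y0 l x y /\ r = rat x0 y0 l x).
  set (T := fun y r => exists x l, is_path E x0 y0 l x y /\ r = (y - x) / rat x0 y0 l x).
  set (a := fun x => epsilon (inhabits 0) (fun r => S x r \/ (~ (exists r', S x r') /\ r = 1))).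
  set (b := fun y => epsilon (inhabits 0) (fun r => T y r \/ (~ (exists r', T y r') /\ r = 1))).
  assert (Ha : forall x, S x (a x) \/ (~ (exists r', S x r') /\ a x = 1)).
  { intros x. unfold a. apply epsilon_spec.
    destruct (classic (exists r', S x r')) as [[r Hr]|Hn]; [exists r; auto|exists 1; auto]. }
  assert (Hb : forall y, T y (b y) \/ (~ (exists r', T y r') /\ b y = 1)).
  { intros y. unfold b. apply epsilon_spec.
    destruct (classic (exists r', T y r')) as [[r Hr]|Hn]; [exists r; auto|exists 1; auto]. }
  exists a, b. split; [|split; [|split]].
  - intros x. destruct (Ha x) as [[y [l [Hl ->]]]|[_ ->]]; [eapply rat_nz; eauto|lra].
  - intros y. destruct (Hb y) as [[x [l [Hl ->]]]|[_ ->]]; [|lra].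
    pose proof (Eo_nz _ _ _ (path_end _ _ _ _ _ _ Hl)). pose proof (rat_nz _ _ _ _ _ _ Hl).
    unfold Rdiv. apply Rmult_integral_contrapositive; split; auto. apply Rinv_neq_0_compat; auto.
  - intros x y Hc. destruct (reach _ _ _ _ H0 Hc) as [l Hl].
    destruct (Ha x) as [[y1 [l1 [Hl1 ->]]]|[Hn _]];
      [|exfalso; apply Hn; exists (rat x0 y0 l x); exists y, l; auto].
    destruct (Hb y) as [[x2 [l2 [Hl2 ->]]]|[Hn _]];
      [|exfalso; apply Hn; exists ((y - x) / rat x0 y0 l x); exists x, l; auto].
    assert (Hs : is_path E x2 y [] x y) by (simpl; pose proof (path_end _ _ _ _ _ _ Hl2); pose proof (C_Eo _ _ Hc); tauto).
    pose proof (path_app _ _ _ _ _ _ _ _ _ Hl2 Hs) as Hl3.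
    rewrite (wd _ _ _ _ _ _ _ H0 Hl1 Hl3), rat_app. simpl.
    pose proof (Eo_nz _ _ _ (path_end _ _ _ _ _ _ Hl2)). pose proof (rat_nz _ _ _ _ _ _ Hl2).
    field; auto.
  - assert (Hp : is_path E x0 y0 [] x0 y0) by (simpl; pose proof (C_Eo _ _ H0); tauto).
    destruct (Ha x0) as [[y1 [l1 [Hl1 ->]]]|[Hn _]];
      [|exfalso; apply Hn; exists (rat x0 y0 [] x0); exists y0, []; auto].
    rewrite (wd _ _ _ _ _ _ _ H0 Hl1 Hp). simpl. pose proof (Eo_nz _ _ _ (C_Eo _ _ H0)). field; auto.
Qed.

End Comp.

Lemma Un_cv_ext (u w : nat -> R) l : (forall n, u n = w n) -> Un_cv u l -> Un_cv w l.
Proof. intros He H eps Heps. destruct (H eps Heps) as [N HN]. exists N. intros n Hn. rewrite <- He. auto. Qed.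

Lemma Un_cv_const c : Un_cv (fun _ => c) c.
Proof. intros eps Heps. exists 0%nat. intros. unfold R_dist. rewrite Rminus_diag, Rabs_R0. auto. Qed.

Theorem proposition2p8 (E C : R -> R -> Prop) :
  is_component E C ->
  no_identifying_cycles E C ->
  (* (a) *)
  (forall (v : R -> R -> R),
     (exists h g, portfolio_position C v h g) ->
     (forall x y, C x y ->
        exists h g ht gt,
          portfolio_position C v h g /\ portfolio_position C v ht gt /\
          h x <> ht x /\ g y <> gt y) /\
     (* one-parameter (affine) family, on C^x × C^y *)
     (exists h0 g0 al be : R -> R,
        (forall c : R, portfolio_position C v
                         (fun x => h0 x + c * al x) (fun y => g0 y + c * be y)) /\
        (forall h g, portfolio_position C v h g ->
           exists! c : R,
             (forall x, projx C x -> h x = h0 x + c * al x) /\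
             (forall y, projy C y -> g y = g0 y + c * be y)))) /\
  (* (b) *)
  (forall x0 y0, C x0 y0 ->
     (exists a b : R -> R,
        (forall x, a x <> 0) /\ (forall y, b y <> 0) /\
        (forall x y, C x y -> a x * b y = y - x) /\ a x0 = 1) /\
     (forall a b a' b' : R -> R,
        (forall x, a x <> 0) -> (forall y, b y <> 0) ->
        (forall x y, C x y -> a x * b y = y - x) -> a x0 = 1 ->
        (forall x, a' x <> 0) -> (forall y, b' y <> 0) ->
        (forall x y, C x y -> a' x * b' y = y - x) -> a' x0 = 1 ->
        (forall x, projx C x -> a x = a' x) /\
        (forall y, projy C y -> b y = b' y)) /\
     (forall (a b : R -> R),
        (forall x, a x <> 0) -> (forall y, b y <> 0) ->
        (forall x y, C x y -> a x * b y = y - x) -> a x0 = 1 ->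
        forall (hn gn : nat -> R -> R) (v : R -> R -> R),
          (forall x y, C x y ->
             Un_cv (fun n => hn n x * (y - x) + gn n y) (v x y)) ->
          let h'n := fun n x => hn n x - hn n x0 / a x in
          let g'n := fun n y => gn n y + hn n x0 * b y in
          (forall n x y, C x y ->
             hn n x * (y - x) + gn n y = h'n n x * (y - x) + g'n n y) /\
          exists h' g' : R -> R,
            (forall x, projx C x -> Un_cv (fun n => h'n n x) (h' x)) /\
            (forall y, projy C y -> Un_cv (fun n => g'n n y) (g' y)) /\
            portfolio_position C v h' g')).
Proof.
  intros HC HN. split.
  - intros v [h0 [g0 Hpos]].
    destruct (C_base E C HC) as [xb [yb Hb]].
    destruct (ab_exist E C HC HN xb yb Hb) as [a [b [Ha [Hb' [Hab Ha0]]]]].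
    split.
    + intros x y Hc. exists h0, g0, (fun x => h0 x + / a x), (fun y => g0 y - b y).
      split; [auto|]. split.
      * intros x' y' Hc'. rewrite (Hpos _ _ Hc'). rewrite <- (Hab _ _ Hc').
        pose proof (Ha x'). field; auto.
      * split.
        -- pose proof (Rinv_neq_0_compat _ (Ha x)). lra.
        -- pose proof (Hb' y). lra.
    + exists h0, g0, (fun x => / a x), (fun y => - b y). split.
      * intros c x' y' Hc'. rewrite (Hpos _ _ Hc'). rewrite <- (Hab _ _ Hc').
        pose proof (Ha x'). field; auto.
      * intros h g Hhg.
        set (c := (h xb - h0 xb) * a xb).
        assert (Hall : forall x y, C x y -> (h x - h0 x = c / a x /\ g y - g0 y = - c * b y)).
        { apply (propagate E C HC (fun x y => h x - h0 x = c / a x /\ g y - g0 y = - c * b y))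
            with (p1 := xb) (p2 := yb); auto.
          - intros x x1 y Hc Hc1 [_ Hg]. split; [|auto].
            pose proof (Hpos _ _ Hc1) as P1. rewrite (Hhg _ _ Hc1) in P1.
            rewrite <- (Hab _ _ Hc1) in P1. pose proof (Ha x1). pose proof (Hb' y).
            apply (Rmult_eq_reg_r (a x1 * b y)). 2: apply Rmult_integral_contrapositive; auto.
            replace (c / a x1 * (a x1 * b y)) with (c * b y) by (field; auto). nra.
          - intros x y y1 Hc Hc1 [Hh _]. split; [auto|].
            pose proof (Hpos _ _ Hc1) as P1. rewrite (Hhg _ _ Hc1) in P1.
            rewrite <- (Hab _ _ Hc1) in P1. pose proof (Ha x).
            assert (h x = h0 x + c / a x) by lra. rewrite H0 in P1.
            replace ((h0 x + c / a x) * (a x * b y1)) with (h0 x * (a x * b y1) + c * b y1) in P1 by (field; auto).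
            lra.
          - split. unfold c. pose proof (Ha xb). field; auto.
            pose proof (Hpos _ _ Hb) as P1. rewrite (Hhg _ _ Hb) in P1.
            rewrite <- (Hab _ _ Hb) in P1. unfold c. nra. }
        exists c. split.
        -- split.
           ++ intros x [y Hc]. destruct (Hall _ _ Hc) as [H1 _]. unfold Rdiv in H1. lra.
           ++ intros y [x Hc]. destruct (Hall _ _ Hc) as [_ H1]. lra.
        -- intros c' [H1 _]. pose proof (H1 xb (ex_intro _ yb Hb)).
           unfold c. pose proof (Ha xb).
           assert (h xb - h0 xb = c' * / a xb) by lra. rewrite H2. field; auto.
  - intros x0 y0 H0. split; [|split].
    + exact (ab_exist E C HC HN x0 y0 H0).
    + intros a b a' b' Ha Hb Hab Ha0 Ha' Hb' Hab' Ha0'.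
      assert (Hall : forall x y, C x y -> a x = a' x /\ b y = b' y).
      { apply (propagate E C HC (fun x y => a x = a' x /\ b y = b' y)) with (p1 := x0) (p2 := y0); auto.
        - intros x x1 y _ Hc1 [_ Hby]. split; [|auto].
          pose proof (Hab _ _ Hc1). pose proof (Hab' _ _ Hc1). rewrite Hby in H.
          apply (Rmult_eq_reg_r (b' y)); auto. lra.
        - intros x y y1 _ Hc1 [Hax _]. split; [auto|].
          pose proof (Hab _ _ Hc1). pose proof (Hab' _ _ Hc1). rewrite Hax in H.
          apply (Rmult_eq_reg_l (a' x)); auto. lra.
        - pose proof (Hab _ _ H0). pose proof (Hab' _ _ H0). rewrite Ha0 in H. rewrite Ha0' in H1.
          split; lra. }
      split.
      * intros x [y Hc]. apply (Hall _ _ Hc).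
      * intros y [x Hc]. apply (Hall _ _ Hc).
    + intros a b Ha Hb Hab Ha0 hn gn v Hv h'n g'n.
      assert (Hid : forall n x y, C x y ->
             hn n x * (y - x) + gn n y = h'n n x * (y - x) + g'n n y).
      { intros n x y Hc. unfold h'n, g'n. rewrite <- (Hab _ _ Hc). pose proof (Ha x). field; auto. }
      split; [exact Hid|].
      assert (Hall : forall x y, C x y -> (exists l, Un_cv (fun n => h'n n x) l) /\
                                         (exists l, Un_cv (fun n => g'n n y) l)).
      { apply (propagate E C HC (fun x y => (exists l, Un_cv (fun n => h'n n x) l) /\
                                         (exists l, Un_cv (fun n => g'n n y) l)))
          with (p1 := x0) (p2 := y0); auto.
        - intros x x1 y _ Hc1 [_ [L HL]]. split; [|exists L; auto].
          pose proof (Eo_nz _ _ _ (C_Eo E C HC _ _ Hc1)).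
          exists ((v x1 y - L) * / (y - x1)).
          apply Un_cv_ext with (u := fun n => ((hn n x1 * (y - x1) + gn n y) - g'n n y) * / (y - x1)).
          + intros n. rewrite (Hid n x1 y Hc1). field; auto.
          + apply CV_mult; [apply CV_minus; auto|apply Un_cv_const].
        - intros x y y1 _ Hc1 [[L HL] _]. split; [exists L; auto|].
          exists (v x y1 - L * (y1 - x)).
          apply Un_cv_ext with (u := fun n => (hn n x * (y1 - x) + gn n y1) - h'n n x * (y1 - x)).
          + intros n. rewrite (Hid n x y1 Hc1). ring.
          + apply CV_minus; auto. apply CV_mult; auto. apply Un_cv_const.
        - assert (Hz : forall n, h'n n x0 = 0) by (intros n; unfold h'n; rewrite Ha0; field).
          split.
          + exists 0. apply Un_cv_ext with (u := fun _ => 0); [intros n; rewrite Hz; auto|apply Un_cv_const].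
          + exists (v x0 y0). apply Un_cv_ext with (u := fun n => hn n x0 * (y0 - x0) + gn n y0); auto.
            intros n. rewrite (Hid n x0 y0 H0), Hz. ring. }
      set (h' := fun x => epsilon (inhabits 0) (fun l => Un_cv (fun n => h'n n x) l)).
      set (g' := fun y => epsilon (inhabits 0) (fun l => Un_cv (fun n => g'n n y) l)).
      assert (Hh : forall x, projx C x -> Un_cv (fun n => h'n n x) (h' x)).
      { intros x [y Hc]. unfold h'. apply epsilon_spec. apply (Hall _ _ Hc). }
      assert (Hg : forall y, projy C y -> Un_cv (fun n => g'n n y) (g' y)).
      { intros y [x Hc]. unfold g'. apply epsilon_spec. apply (Hall _ _ Hc). }
      exists h', g'. split; [auto|]. split; [auto|].
      intros x y Hc. apply (UL_sequence (fun n => hn n x * (y - x) + gn n y)); [apply Hv; exact Hc|].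
      apply Un_cv_ext with (u := fun n => h'n n x * (y - x) + g'n n y).
      * intros n. symmetry. apply Hid. exact Hc.
      * apply CV_plus. apply CV_mult. apply Hh; exists y; auto. apply Un_cv_const.
        apply Hg; exists x; auto.
Qed.
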